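(* $\mathrm{Aut}(L_{\mathbb Z})=O(3,1;\mathbb Z)$.
   Context: Let $L_{\mathbb Z}=\{(y_0,y_1,y_2,y_3)^T\in\mathbb Z^4:-y_0^2+y_1^2+y_2^2+y_3^2=0\}$ be the set of integer points on the Lorentz light cone, and let $\mathrm{Aut}(L_{\mathbb Z})$ be the group of invertible real linear transformations $U$ of $\mathbb R^4$ with $U(L_{\mathbb Z})=L_{\mathbb Z}$. Let $Q_L=\mathrm{diag}(-1,1,1,1)$ and $O(3,1;\mathbb Z)=\{U\in M_4(\mathbb Z):U^TQ_LU=Q_L\}$. *)

(* Defs.v *)
From HB Require Import structures.
From mathcomp Require Import all_boot all_order all_algebra.
From mathcomp Require Import boolp classical_sets reals.
Unset Printing Implicit Defensive.
Import Order.TTheory GRing.Theory Num.Theory.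
Local Open Scope ring_scope.
Local Open Scope classical_set_scope.

Definition QL (R : realType) : 'M[R]_4 :=
  diag_mx (\row_(i < 4) (if i == ord0 then -1 else 1)).

Definition LZ (R : realType) : set 'cV[R]_4 :=
  [set y : 'cV[R]_4 | (forall i, y i 0 \is a Num.int) /\
     - (y (inord 0) 0) ^+ 2 + (y (inord 1) 0) ^+ 2 + (y (inord 2) 0) ^+ 2
       + (y (inord 3) 0) ^+ 2 = 0].

Definition AutLZ (R : realType) : set 'M[R]_4 :=
  [set U : 'M[R]_4 | U \in unitmx /\ (fun y => U *m y) @` (LZ R) = LZ R].

Definition O31Z (R : realType) : set 'M[R]_4 :=
  [set U : 'M[R]_4 | (forall i j, U i j \is a Num.int) /\ U^T *m QL R *m U = QL R].

(* Main.v *)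
Require Import Defs.
From HB Require Import structures.
From mathcomp Require Import all_boot all_order all_algebra.
From mathcomp Require Import boolp classical_sets reals.
From mathcomp Require Import ring lra zify.
Import Order.TTheory GRing.Theory Num.Theory.
Local Open Scope ring_scope.
Lemma int_par (s : int) : exists k, s = 2*k \/ s = 2*k+1.
Proof.
exists (s %/ 2)%Z. have := divz_eq s 2. have := modz_ge0 s (isT : (2:int) != 0).
have := ltz_pmod s (isT : (0:int) < 2). lia.
Qed.

Lemma sq_even (s t : int) : s * s = 2 * t -> exists k, s = 2 * k.
Proof. case: (int_par s) => k [->|->] H; first by exists k. exfalso; lia. Qed.

Lemma kk1_even (k : int) : exists t, k * k + k = 2 * t.
Proof. case: (int_par k) => j [->|->]; [exists (2 * j * j + j)|exists (2 * j * j + 3 * j + 1)]; lia. Qed.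

Lemma no_neg1 (a k1 k2 k3 : int) :
  a*a + 2*a*(k1+k2+k3) + 2*(k1*k1+k2*k2+k3*k3) <> -1.
Proof.
case: (int_par a) => t [->|->]; first lia.
have [u1 h1] := kk1_even k1; have [u2 h2] := kk1_even k2; have [u3 h3] := kk1_even k3.
lia.
Qed.
Section Sc.
Context {R : realType}.
Notation isZ x := (x \is a Num.int).

Lemma row_lemma (a0 a1 a2 a3 : R) : isZ (2* a0) -> isZ (a0+a1) -> isZ (a0+a2) ->
  isZ (a0+a3) -> isZ (-a0^+2+a1^+2+a2^+2+a3^+2) -> isZ a0.
Proof.
move=> /intrP[s Hs] /intrP[t1 H1] /intrP[t2 H2] /intrP[t3 H3] /intrP[r Hr].
have E : ((s * s - 2 * (r - (t1* t1 - t1* s + t2* t2 - t2* s + t3* t3 - t3* s))) : int)%:~R = 0 :> R.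
  have e1 : a1 = t1%:~R - a0 by rewrite -H1; ring.
  have e2 : a2 = t2%:~R - a0 by rewrite -H2; ring.
  have e3 : a3 = t3%:~R - a0 by rewrite -H3; ring.
  have e0 : a0 = s%:~R / 2 by rewrite -Hs; field.
  rewrite e1 e2 e3 e0 in Hr.
  move/eqP: Hr; rewrite -subr_eq0 => /eqP Hr.
  by rewrite -(mulr0 (2:R)) -Hr; field.
move/eqP: E; rewrite intr_eq0 => /eqP E.
have [k Hk] : exists k, s = 2 * k by apply: (@sq_even s (r - (t1* t1 - t1* s + t2* t2 - t2* s + t3* t3 - t3* s))); lia.
apply/intrP; exists k. apply: (@mulfI _ (2:R)); first by rewrite pnatr_eq0.
by rewrite Hs Hk intrM.
Qed.

Lemma no_two (a0 a1 a2 a3 : R) : isZ a0 -> isZ ((a1-a0)/2) -> isZ ((a2-a0)/2) ->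
  isZ ((a3-a0)/2) -> -a0^+2+a1^+2+a2^+2+a3^+2 = -2 -> False.
Proof.
move=> /intrP[a Ha] /intrP[k1 H1] /intrP[k2 H2] /intrP[k3 H3] Hn.
have e1 : a1 = a0 + 2 * k1%:~R by rewrite -H1; field.
have e2 : a2 = a0 + 2 * k2%:~R by rewrite -H2; field.
have e3 : a3 = a0 + 2 * k3%:~R by rewrite -H3; field.
rewrite e1 e2 e3 Ha in Hn.
have E : ((a* a + 2* a*(k1+k2+k3) + 2*(k1* k1+k2* k2+k3* k3) + 1) : int)%:~R = 0 :> R.
  have -> : (0:R) = ((- a%:~R ^+ 2 + (a%:~R + 2 * k1%:~R) ^+ 2 + (a%:~R + 2 * k2%:~R) ^+ 2 +
       (a%:~R + 2 * k3%:~R) ^+ 2) + 2)/2 by rewrite Hn; field.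
  by field.
move/eqP: E; rewrite intr_eq0 => /eqP E.
apply: (no_neg1 a k1 k2 k3); lia.
Qed.

Lemma sig_lemma (p q x1 x2 x3 y1 y2 y3 : R) :
  -p^+2 + x1^+2 + x2^+2 + x3^+2 = -1 -> -q^+2 + y1^+2 + y2^+2 + y3^+2 = -1 ->
  -p* q + x1* y1 + x2* y2 + x3* y3 = 0 -> False.
Proof.
move=> Hx Hy Hxy.
have E : (p* y1 - q* x1)^+2 + (p* y2 - q* x2)^+2 + (p* y3 - q* x3)^+2 = -(p^+2+q^+2).
  have ex : x1^+2 + x2^+2 + x3^+2 = p^+2 - 1 by lra.
  have ey : y1^+2 + y2^+2 + y3^+2 = q^+2 - 1 by lra.
  have exy : x1* y1 + x2* y2 + x3* y3 = p* q by lra.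
  have -> : (p* y1 - q* x1)^+2 + (p* y2 - q* x2)^+2 + (p* y3 - q* x3)^+2 =
     p^+2 * (y1^+2 + y2^+2 + y3^+2) + q^+2 * (x1^+2 + x2^+2 + x3^+2) - 2* p* q*(x1* y1 + x2* y2 + x3* y3) by ring.
  rewrite ex ey exy; ring.
have h1 := sqr_ge0 (p* y1 - q* x1). have h2 := sqr_ge0 (p* y2 - q* x2).
have h3 := sqr_ge0 (p* y3 - q* x3). have hp := sqr_ge0 p. have hq := sqr_ge0 q.
have p0 : p^+2 = 0 by lra.
have g1 := sqr_ge0 x1. have g2 := sqr_ge0 x2. have g3 := sqr_ge0 x3.
lra.
Qed.
End Sc.
Section M.
Context {R : realType}.
Notation isZ x := (x \is a Num.int).
Notation i0 := (@inord 3 0).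
Notation i1 := (@inord 3 1).
Notation i2 := (@inord 3 2).
Notation i3 := (@inord 3 3).

Lemma ord4 (j : 'I_4) : j = i0 \/ j = i1 \/ j = i2 \/ j = i3.
Proof.
case: j => [[|[|[|[|k]]]] Hk].
- by left; apply/val_inj; rewrite /= inordK.
- by right; left; apply/val_inj; rewrite /= inordK.
- by right; right; left; apply/val_inj; rewrite /= inordK.
- by right; right; right; apply/val_inj; rewrite /= inordK.
- by [].
Qed.

Lemma sum4 (F : 'I_4 -> R) : \sum_j F j = F i0 + F i1 + F i2 + F i3.
Proof.
rewrite !big_ord_recl big_ord0 addr0 !addrA.
by congr (F _ + F _ + F _ + F _); apply/val_inj; rewrite /= inordK.
Qed.

Definition sgn (i : 'I_4) : R := if i == i0 then -1 else 1.

Lemma QLE i j : QL R i j = sgn i *+ (i == j).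
Proof.
rewrite /QL mxE mxE /sgn; congr (_ *+ _); congr (if _ then _ else _).
by apply/eqP/eqP => [->|->]; apply/val_inj; rewrite /= ?inordK.
Qed.

Definition qf (v : 'cV[R]_4) := - (v i0 0) ^+ 2 + (v i1 0) ^+ 2 + (v i2 0) ^+ 2 + (v i3 0) ^+ 2.

Lemma LZE y : LZ R y = ((forall i, isZ (y i 0)) /\ qf y = 0).
Proof. by []. Qed.

Definition Bf (X : 'M[R]_4) j k :=
  -(X i0 j * X i0 k) + X i1 j * X i1 k + X i2 j * X i2 k + X i3 j * X i3 k.
Definition Rf (X : 'M[R]_4) j k :=
  -(X j i0 * X k i0) + X j i1 * X k i1 + X j i2 * X k i2 + X j i3 * X k i3.

Lemma sgnE : sgn i0 = -1 /\ sgn i1 = 1 /\ sgn i2 = 1 /\ sgn i3 = 1.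
Proof.
rewrite /sgn eqxx; split=> //.
by split; [|split]; case: eqP => // /(congr1 val); rewrite /= !inordK.
Qed.

Lemma QLd : QL R = diag_mx (\row_i sgn i).
Proof. by apply/matrixP => i j; rewrite QLE !mxE. Qed.

Lemma BE (X : 'M[R]_4) j k : (X^T *m QL R *m X) j k = Bf X j k.
Proof.
rewrite QLd mul_mx_diag mxE sum4 !mxE.
case: sgnE => -> [-> [-> ->]]. rewrite /Bf. ring.
Qed.

Lemma RE (X : 'M[R]_4) j k : (X *m QL R *m X^T) j k = Rf X j k.
Proof.
rewrite QLd mul_mx_diag mxE sum4 !mxE.
case: sgnE => -> [-> [-> ->]]. rewrite /Rf. ring.
Qed.

Lemma qfE (v : 'cV[R]_4) : (v^T *m QL R *m v) 0 0 = qf v.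
Proof.
rewrite QLd mul_mx_diag mxE sum4 !mxE.
case: sgnE => -> [-> [-> ->]]. rewrite /qf. ring.
Qed.

Lemma QQ : QL R *m QL R = 1%:M.
Proof.
apply/matrixP => i j; rewrite QLd mul_mx_diag !mxE.
case: sgnE => e0 [e1 [e2 e3]].
by case: (ord4 i) => [->|[->|[->|->]]]; case: eqP => [<-|_]; rewrite ?e0 ?e1 ?e2 ?e3 ?mulr1n ?mulr0n ?mul0r //; ring.
Qed.

Definition vec4 (a b c d : R) : 'cV[R]_4 :=
  \col_(i < 4) (if val i == 0%N then a else if val i == 1%N then b else if val i == 2%N then c else d).

Lemma vec4E a b c d : vec4 a b c d i0 0 = a /\ vec4 a b c d i1 0 = b /\
  vec4 a b c d i2 0 = c /\ vec4 a b c d i3 0 = d.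
Proof. by rewrite !mxE /= !inordK. Qed.

Definition lin (X : 'M[R]_4) a b c d i := X i i0 * a + X i i1 * b + X i i2 * c + X i i3 * d.

Lemma mulvec X a b c d i : (X *m vec4 a b c d) i 0 = lin X a b c d i.
Proof. by rewrite mxE sum4; case: (vec4E a b c d) => -> [-> [-> ->]]. Qed.

Lemma LZvec a b c d : isZ a -> isZ b -> isZ c -> isZ d -> -a^+2+b^+2+c^+2+d^+2 = 0 ->
  LZ R (vec4 a b c d).
Proof.
move=> ha hb hc hd hq; rewrite LZE /qf; case: (vec4E a b c d) => e0 [e1 [e2 e3]].
rewrite e0 e1 e2 e3; split=> // i.
by case: (ord4 i) => [->|[->|[->|->]]]; rewrite ?e0 ?e1 ?e2 ?e3.
Qed.

Arguments LZvec {a b c d}.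
Definition Pres (X : 'M[R]_4) := forall y, LZ R y -> LZ R (X *m y).

Lemma useP X a b c d : Pres X -> isZ a -> isZ b -> isZ c -> isZ d -> -a^+2+b^+2+c^+2+d^+2 = 0 ->
  (forall i, isZ (lin X a b c d i)) /\
  -(lin X a b c d i0)^+2 + (lin X a b c d i1)^+2 + (lin X a b c d i2)^+2 + (lin X a b c d i3)^+2 = 0.
Proof.
move=> HP ha hb hc hd hq; have := HP _ (LZvec ha hb hc hd hq).
by rewrite LZE /qf !mulvec => -[H1 H2]; split=> // i; rewrite -mulvec.
Qed.

Arguments useP {X a b c d}.
Lemma isZc : isZ (0:R) /\ isZ (1:R) /\ isZ (-1:R) /\ isZ (2:R) /\ isZ (-2:R) /\ isZ (3:R).
Proof. by rewrite ?rpredN ?rpred0 ?rpred1 ?rpred_nat. Qed.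

Lemma Bf_sym X j k : Bf X j k = Bf X k j.
Proof. rewrite /Bf; ring. Qed.

Lemma lamQ X : Pres X -> X^T *m QL R *m X = (- Bf X i0 i0) *: QL R.
Proof.
move=> HP.
case: isZc => z0 [z1 [zm1 [z2 [zm2 z3]]]].
have [_ q1] := useP HP z1 z1 z0 z0 ltac:(ring).
have [_ q2] := useP HP z1 zm1 z0 z0 ltac:(ring).
have [_ q3] := useP HP z1 z0 z1 z0 ltac:(ring).
have [_ q4] := useP HP z1 z0 zm1 z0 ltac:(ring).
have [_ q5] := useP HP z1 z0 z0 z1 ltac:(ring).
have [_ q6] := useP HP z1 z0 z0 zm1 ltac:(ring).
have [_ q7] := useP HP z3 z2 z2 z1 ltac:(ring).
have [_ q8] := useP HP z3 zm2 z2 z1 ltac:(ring).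
have [_ q9] := useP HP z3 z2 zm2 z1 ltac:(ring).
rewrite /lin in q1 q2 q3 q4 q5 q6 q7 q8 q9.
have b01 : Bf X i0 i1 = 0 by rewrite /Bf; lra.
have b02 : Bf X i0 i2 = 0 by rewrite /Bf; lra.
have b03 : Bf X i0 i3 = 0 by rewrite /Bf; lra.
have b11 : Bf X i1 i1 = - Bf X i0 i0 by rewrite /Bf; lra.
have b22 : Bf X i2 i2 = - Bf X i0 i0 by rewrite /Bf; lra.
have b33 : Bf X i3 i3 = - Bf X i0 i0 by rewrite /Bf; lra.
have b12 : Bf X i1 i2 = 0 by rewrite /Bf; lra.
have b13 : Bf X i1 i3 = 0 by rewrite /Bf; lra.
have b23 : Bf X i2 i3 = 0 by rewrite /Bf; lra.
case: sgnE => e0 [e1 [e2 e3]].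
have n01 : (i0 == i1) = false by apply/eqP => /(congr1 val); rewrite /= !inordK.
have n02 : (i0 == i2) = false by apply/eqP => /(congr1 val); rewrite /= !inordK.
have n03 : (i0 == i3) = false by apply/eqP => /(congr1 val); rewrite /= !inordK.
have n12 : (i1 == i2) = false by apply/eqP => /(congr1 val); rewrite /= !inordK.
have n13 : (i1 == i3) = false by apply/eqP => /(congr1 val); rewrite /= !inordK.
have n23 : (i2 == i3) = false by apply/eqP => /(congr1 val); rewrite /= !inordK.
clear q1 q2 q3 q4 q5 q6 q7 q8 q9.
apply/matrixP => j k; rewrite BE mxE QLE.
case: (ord4 j) => [->|[->|[->|->]]]; case: (ord4 k) => [->|[->|[->|->]]];
  rewrite ?eqxx ?n01 ?n02 ?n03 ?n12 ?n13 ?n23 ?(eq_sym i1 i0) ?(eq_sym i2 i0) ?(eq_sym i3 i0)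
     ?(eq_sym i2 i1) ?(eq_sym i3 i1) ?(eq_sym i3 i2) ?n01 ?n02 ?n03 ?n12 ?n13 ?n23
     ?mulr0n ?mulr1n ?e0 ?e1 ?e2 ?e3 ?mulr0 ?mulr1;
  rewrite ?b01 ?b02 ?b03 ?b11 ?b22 ?b33 ?b12 ?b13 ?b23
     ?(Bf_sym X i1 i0) ?(Bf_sym X i2 i0) ?(Bf_sym X i3 i0) ?(Bf_sym X i2 i1) ?(Bf_sym X i3 i1) ?(Bf_sym X i3 i2)
     ?b01 ?b02 ?b03 ?b12 ?b13 ?b23; lra.
Qed.
End M.
Section M2.
Context {R : realType}.
Notation isZ x := (x \is a Num.int).
Notation i0 := (@inord 3 0).
Notation i1 := (@inord 3 1).
Notation i2 := (@inord 3 2).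
Notation i3 := (@inord 3 3).
Notation Q := (QL R).

Lemma QQ' : Q *m Q = 1%:M. Proof. exact: QQ. Qed.

Lemma Wleft (X : 'M[R]_4) lam : X^T *m Q *m X = lam *: Q -> lam != 0 ->
  (lam^-1 *: (Q *m X^T *m Q)) *m X = 1%:M.
Proof.
move=> H l0.
rewrite -scalemxAl.
have -> : Q *m X^T *m Q *m X = Q *m (X^T *m Q *m X) by rewrite !mulmxA.
by rewrite H -scalemxAr scalerA mulVf // scale1r QQ'.
Qed.

Lemma Wright (X : 'M[R]_4) lam : X^T *m Q *m X = lam *: Q -> lam != 0 ->
  X *m (lam^-1 *: (Q *m X^T *m Q)) = 1%:M.
Proof. by move=> H l0; apply: mulmx1C; apply: Wleft. Qed.

Lemma Winv (X : 'M[R]_4) lam : X^T *m Q *m X = lam *: Q -> lam != 0 ->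
  invmx X = lam^-1 *: (Q *m X^T *m Q).
Proof.
move=> H l0; have := @Wright X lam H l0 => E.
have [U _] := mulmx1_unit E.
by rewrite -[invmx X]mulmx1 -E mulmxA mulVmx // mul1mx.
Qed.

Lemma rowrel (X : 'M[R]_4) lam : X^T *m Q *m X = lam *: Q -> lam != 0 ->
  X *m Q *m X^T = lam *: Q.
Proof.
move=> H l0; have := @Wright X lam H l0.
rewrite -scalemxAr !mulmxA => E.
have : (lam^-1 *: (X *m Q *m X^T *m Q)) *m Q = Q by rewrite E mul1mx.
rewrite -scalemxAl.
have -> : X *m Q *m X^T *m Q *m Q = X *m Q *m X^T *m (Q *m Q) by rewrite !mulmxA.
by rewrite QQ' mulmx1 => /(congr1 (fun M => lam *: M)); rewrite scalerA mulfV // scale1r.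
Qed.

Lemma lammu (X : 'M[R]_4) lam mu : X \in unitmx -> X^T *m Q *m X = lam *: Q ->
  (invmx X)^T *m Q *m (invmx X) = mu *: Q -> lam * mu = 1.
Proof.
move=> U H1 H2.
have : (X *m invmx X)^T *m Q *m (X *m invmx X) = (lam * mu) *: Q.
  rewrite trmx_mul.
  have -> : (invmx X)^T *m X^T *m Q *m (X *m invmx X) = (invmx X)^T *m (X^T *m Q *m X) *m invmx X by rewrite !mulmxA.
  by rewrite H1 -scalemxAr -scalemxAl H2 scalerA.
rewrite mulmxV // trmx1 mul1mx mulmx1 => /matrixP /(_ i0 i0).
rewrite !mxE eqxx mulr1n.
have -> : (@inord 3 0 == ord0) = true by apply/eqP/val_inj; rewrite /= inordK.
lra.
Qed.

End M2.
Arguments useP {R X a b c d}.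
Arguments LZvec {R a b c d}.
Arguments lamQ {R X}.
Arguments Winv {R X lam}.
Arguments rowrel {R X lam}.
Arguments lammu {R X lam mu}.
Section M3.
Context {R : realType}.
Notation isZ x := (x \is a Num.int).
Notation i0 := (@inord 3 0).
Notation i1 := (@inord 3 1).
Notation i2 := (@inord 3 2).
Notation i3 := (@inord 3 3).
Notation Q := (QL R).

Lemma halfZ (X : 'M[R]_4) : Pres X -> forall i, isZ (X i i0 + X i i1) /\
  isZ (X i i0 + X i i2) /\ isZ (X i i0 + X i i3) /\ isZ (2 * X i i0).
Proof.
move=> HP i; case: (@isZc R) => z0 [z1 [zm1 [z2 [zm2 z3]]]].
have [h1 _] := useP HP z1 z1 z0 z0 ltac:(ring).
have [h2 _] := useP HP z1 zm1 z0 z0 ltac:(ring).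
have [h3 _] := useP HP z1 z0 z1 z0 ltac:(ring).
have [h4 _] := useP HP z1 z0 z0 z1 ltac:(ring).
move: (h1 i) (h2 i) (h3 i) (h4 i); rewrite /lin !mulr1 !mulr0 !addr0 !mulrN1 => g1 g2 g3 g4.
split; first by [].
split; first by [].
split; first by [].
have -> : 2 * X i i0 = (X i i0 + X i i1) + (X i i0 + - X i i1) by ring.
exact: rpredD.
Qed.

Definition lamf (X : 'M[R]_4) := - Bf X i0 i0.

Lemma Bent (X : 'M[R]_4) : Pres X -> Bf X i1 i1 = lamf X /\ Bf X i2 i2 = lamf X /\ Bf X i1 i2 = 0.
Proof.
move=> HP; case: (@sgnE R) => e0 [e1 [e2 e3]].
have n12 : (i1 == i2) = false by apply/eqP => /(congr1 val); rewrite /= !inordK.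
have sE : forall a (A : 'M[R]_4) i j, (a *: A) i j = a * A i j by move=> *; rewrite mxE.
rewrite -!BE (lamQ HP) !sE !QLE.
by rewrite !eqxx n12 !mulr1n mulr0n e1 e2 !mulr1 mulr0 /lamf.
Qed.

Lemma twolam (X : 'M[R]_4) : Pres X -> isZ (2 * lamf X).
Proof.
move=> HP; case: (@isZc R) => z0 [z1 [zm1 [z2 [zm2 z3]]]].
have [h1 _] := useP HP z1 z1 z0 z0 ltac:(ring).
have [h2 _] := useP HP z1 zm1 z0 z0 ltac:(ring).
have [b11 _] := Bent _ HP.
have E : 2 * lamf X = - (- (lin X 1 1 0 0 i0 * lin X 1 (-1) 0 0 i0) + lin X 1 1 0 0 i1 * lin X 1 (-1) 0 0 i1
   + lin X 1 1 0 0 i2 * lin X 1 (-1) 0 0 i2 + lin X 1 1 0 0 i3 * lin X 1 (-1) 0 0 i3).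
  move: b11; rewrite /lamf /Bf /lin; lra.
rewrite E rpredN; repeat apply: rpredD; rewrite ?rpredN; apply: rpredM; done.
Qed.

Lemma sgnZ (i : 'I_4) : isZ (sgn i : R).
Proof. by rewrite /sgn; case: ifP; rewrite ?rpredN rpred1. Qed.

Lemma intX (Y : 'M[R]_4) : Pres Y -> isZ (lamf Y) -> lamf Y != 0 -> forall i j, isZ (Y i j).
Proof.
move=> HP hl l0 i.
have RR := rowrel (lamQ HP) l0.
have sE : forall a (A : 'M[R]_4) i j, (a *: A) i j = a * A i j by move=> *; rewrite mxE.
have hr : isZ (Rf Y i i) by rewrite -RE RR sE QLE eqxx mulr1n rpredM // sgnZ.
have [g1 [g2 [g3 g4]]] := halfZ _ HP i.
have hr' : isZ (- Y i i0 ^+ 2 + Y i i1 ^+ 2 + Y i i2 ^+ 2 + Y i i3 ^+ 2).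
  by have <- : Rf Y i i = - Y i i0 ^+ 2 + Y i i1 ^+ 2 + Y i i2 ^+ 2 + Y i i3 ^+ 2 by rewrite /Rf; ring.
have h0 := row_lemma _ _ _ _ g4 g1 g2 g3 hr'.
move=> j; case: (ord4 j) => [->|[->|[->|->]]] //.
- have -> : Y i i1 = (Y i i0 + Y i i1) - Y i i0 by ring.
  by apply: rpredB.
- have -> : Y i i2 = (Y i i0 + Y i i2) - Y i i0 by ring.
  by apply: rpredB.
- have -> : Y i i3 = (Y i i0 + Y i i3) - Y i i0 by ring.
  by apply: rpredB.
Qed.

Lemma notm1 (Y : 'M[R]_4) : Pres Y -> lamf Y = -1 -> False.
Proof.
move=> HP hl; have [b11 [b22 b12]] := Bent _ HP.
apply: (@sig_lemma R (Y i0 i1) (Y i0 i2) (Y i1 i1) (Y i2 i1) (Y i3 i1) (Y i1 i2) (Y i2 i2) (Y i3 i2));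
  move: b11 b22 b12; rewrite hl /Bf => *; lra.
Qed.

Lemma Ve (Y : 'M[R]_4) (HP : Pres Y) : lamf Y != 0 -> forall a b,
  invmx Y a b = (lamf Y)^-1 * (sgn a * Y b a * sgn b).
Proof.
move=> l0 a b; rewrite (Winv (lamQ HP) l0).
rewrite mxE QLd mul_mx_diag mxE mul_diag_mx !mxE.
by [].
Qed.

Lemma notwo (Y : 'M[R]_4) : Y \in unitmx -> Pres Y -> Pres (invmx Y) ->
  lamf Y = 2 \/ lamf Y = -2 -> False.
Proof.
move=> U HP HV hl.
case: (@sgnE R) => e0 [e1 [e2 e3]].
have l0 : lamf Y != 0 by case: hl => ->; rewrite ?oppr_eq0 pnatr_eq0.
have hZ : isZ (lamf Y) by case: hl => ->; case: (@isZc R) => _ [_ [_ [z2 [zm2 _]]]].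
have I := intX _ HP hZ l0.
have V := Ve _ HP l0.
case: hl => hl.
- have [g1 [g2 [g3 _]]] := halfZ _ HV i0.
  rewrite !V hl e0 e1 e2 e3 in g1 g2 g3.
  apply: (@no_two R (Y i0 i0) (Y i1 i0) (Y i2 i0) (Y i3 i0) (I i0 i0)).
  + have -> : (Y i1 i0 - Y i0 i0) / 2 = - (2^-1 * (-1 * Y i0 i0 * -1) + 2^-1 * (-1 * Y i1 i0 * 1)) by field.
    by rewrite rpredN.
  + have -> : (Y i2 i0 - Y i0 i0) / 2 = - (2^-1 * (-1 * Y i0 i0 * -1) + 2^-1 * (-1 * Y i2 i0 * 1)) by field.
    by rewrite rpredN.
  + have -> : (Y i3 i0 - Y i0 i0) / 2 = - (2^-1 * (-1 * Y i0 i0 * -1) + 2^-1 * (-1 * Y i3 i0 * 1)) by field.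
    by rewrite rpredN.
  + move: hl; rewrite /lamf /Bf => hl; lra.
- have [g1 [g2 [g3 _]]] := halfZ _ HV i1.
  rewrite !V hl e0 e1 e2 e3 in g1 g2 g3.
  have [b11 _] := Bent _ HP.
  apply: (@no_two R (Y i0 i1) (Y i1 i1) (Y i2 i1) (Y i3 i1) (I i0 i1)).
  + have -> : (Y i1 i1 - Y i0 i1) / 2 = - ((-2)^-1 * (1 * Y i0 i1 * -1) + (-2)^-1 * (1 * Y i1 i1 * 1)) by field.
    by rewrite rpredN.
  + have -> : (Y i2 i1 - Y i0 i1) / 2 = - ((-2)^-1 * (1 * Y i0 i1 * -1) + (-2)^-1 * (1 * Y i2 i1 * 1)) by field.
    by rewrite rpredN.
  + have -> : (Y i3 i1 - Y i0 i1) / 2 = - ((-2)^-1 * (1 * Y i0 i1 * -1) + (-2)^-1 * (1 * Y i3 i1 * 1)) by field.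
    by rewrite rpredN.
  + move: b11; rewrite hl /Bf => b11; lra.
Qed.
End M3.
Arguments lamQ {R X}.
Arguments Winv {R X lam}.
Arguments Wleft {R X lam}.
Arguments Wright {R X lam}.
Arguments lammu {R X lam mu}.
Section M4.
Context {R : realType}.
Notation isZ x := (x \is a Num.int).
Notation i0 := (@inord 3 0).
Notation i1 := (@inord 3 1).
Notation i2 := (@inord 3 2).
Notation i3 := (@inord 3 3).
Notation Q := (QL R).

Lemma nm4 (n m : int) : n * m = 4 -> n = 1 \/ n = -1 \/ n = 2 \/ n = -2 \/ n = 4 \/ n = -4.
Proof.
move=> H.
have m0 : m <> 0 by move=> h; rewrite h mulr0 in H.
have : -4 <= n <= 4.
  have [hm|hm] : 1 <= m \/ m <= -1 by lia.
  - nia.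
  - nia.
have : n = -4 \/ n = -3 \/ n = -2 \/ n = -1 \/ n = 0 \/ n = 1 \/ n = 2 \/ n = 3 \/ n = 4 by lia.
case=> [e|[e|[e|[e|[e|[e|[e|[e|e]]]]]]]] _; rewrite e in H *; lia.
Qed.

Lemma master (X : 'M[R]_4) : X \in unitmx -> Pres X -> Pres (invmx X) ->
  (forall i j, isZ (X i j)) /\ X^T *m Q *m X = Q.
Proof.
move=> U HP HV.
have lm := lammu U (lamQ HP) (lamQ HV).
rewrite -/(lamf X) -/(lamf (invmx X)) in lm.
have /intrP [n hn] := twolam _ HP.
have /intrP [m hm] := twolam _ HV.
have nm : n * m = 4.
  have E : ((n * m - 4 : int)%:~R : R) = 4 * (lamf X * lamf (invmx X)) - 4.
    have -> : ((n * m - 4 : int)%:~R : R) = n%:~R * m%:~R - 4 by ring.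
    rewrite -hn -hm; ring.
  rewrite lm mulr1 subrr in E.
  move/eqP: E; rewrite intr_eq0 subr_eq0 => /eqP //.
have := @nm4 n m nm.
case=> [e|[e|[e|[e|[e|e]]]]]; rewrite e in hn.
- have hv : lamf (invmx X) = 2 by move: hn lm => /= hn lm; nra.
  by exfalso; apply: (notwo (invmx X)) => //; [rewrite unitmx_inv | rewrite invmxK | left].
- have hv : lamf (invmx X) = -2 by move: hn lm => /= hn lm; nra.
  by exfalso; apply: (notwo (invmx X)) => //; [rewrite unitmx_inv | rewrite invmxK | right].
- have hl : lamf X = 1 by move: hn => /= hn; lra.
  split; first by apply: (intX _ HP); rewrite hl ?rpred1 ?oner_eq0.
  by rewrite (lamQ HP) -/(lamf X) hl scale1r.
- have hl : lamf X = -1 by move: hn => /= hn; lra.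
  by exfalso; apply: (notm1 _ HP).
- have hl : lamf X = 2 by move: hn => /= hn; lra.
  by exfalso; apply: (notwo _ U HP HV); left.
- have hl : lamf X = -2 by move: hn => /= hn; lra.
  by exfalso; apply: (notwo _ U HP HV); right.
Qed.
End M4.
Arguments Wright {R X lam}.
Section M5.
Context {R : realType}.
Notation isZ x := (x \is a Num.int).
Notation Q := (QL R).

Lemma intmul m n p (A : 'M[R]_(m, n)) (B : 'M[R]_(n, p)) :
  (forall i j, isZ (A i j)) -> (forall i j, isZ (B i j)) -> forall i j, isZ ((A *m B) i j).
Proof. by move=> hA hB i j; rewrite mxE; apply: rpred_sum => k _; apply: rpredM. Qed.

Lemma QZ : forall i j, isZ (Q i j).
Proof. by move=> i j; rewrite QLE rpredMn // sgnZ. Qed.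

Lemma qfmul (A : 'M[R]_4) (y : 'cV[R]_4) : qf (A *m y) = (y^T *m (A^T *m Q *m A) *m y) 0 0.
Proof. by rewrite -qfE trmx_mul !mulmxA. Qed.

Lemma inv_pres (U : 'M[R]_4) : U \in unitmx -> U^T *m Q *m U = Q -> (invmx U)^T *m Q *m invmx U = Q.
Proof.
move=> hU H.
have : (U *m invmx U)^T *m Q *m (U *m invmx U) = Q by rewrite mulmxV // trmx1 mul1mx mulmx1.
rewrite trmx_mul.
have -> : (invmx U)^T *m U^T *m Q *m (U *m invmx U) = (invmx U)^T *m (U^T *m Q *m U) *m invmx U by rewrite !mulmxA.
by rewrite H.
Qed.

Lemma presQ (U : 'M[R]_4) : (forall i j, isZ (U i j)) -> U^T *m Q *m U = Q -> Pres U.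
Proof.
move=> hI hQ y; rewrite !LZE => -[hy qy]; split.
  move=> i; apply: intmul => // a b; by rewrite (ord1 b).
by rewrite qfmul hQ qfE.
Qed.
End M5.

Theorem lemma7p3 (R : realType) : AutLZ R = O31Z R.
Proof.
apply/seteqP; split => U /=.
- case=> hU himg.
  have HP : Pres U by move=> y hy; rewrite -himg; exists y.
  have HV : Pres (invmx U).
    move=> y hy; have : ((fun y => U *m y) @` LZ R)%classic y by rewrite himg.
    by case=> x hx <-; rewrite mulKmx.
  exact: master hU HP HV.
- case=> hI hQ.
  have hQ1 : U^T *m QL R *m U = 1 *: QL R by rewrite scale1r.
  have hU : U \in unitmx by case: (mulmx1_unit (Wright hQ1 (oner_neq0 R))).
  split; first exact: hU.
  have Hinv := Winv hQ1 (oner_neq0 R).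
  rewrite invr1 scale1r in Hinv.
  have hIV : forall i j, (invmx U i j) \is a Num.int.
    by rewrite Hinv; apply: intmul; [apply: intmul => //; [exact: QZ | move=> i j; rewrite mxE] | exact: QZ].
  apply/seteqP; split => y /=.
  + by case=> x hx <-; apply: presQ.
  + move=> hy; exists (invmx U *m y); last by rewrite mulKVmx.
    by apply: presQ => //; apply: inv_pres.
Qed.
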